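(* Let $A$ be a square matrix. If some principal submatrix $A[\kappa]$ of $A$ is Hurwitz-stable but is not a $P^-_0$ matrix, then $A$ is $D$-Hopf.
   Context: A square matrix is Hurwitz-stable if all its eigenvalues have negative real part and Hurwitz-unstable if at least one eigenvalue has positive real part. A matrix is a $P^-_0$ matrix if every nonzero $k\times k$ principal minor has sign $(-1)^k$ (for all $k$). Inertia: numbers of eigenvalues with negative, positive, zero real part. $A[\kappa]$ is the principal submatrix indexed by $\kappa$. $A$ is $D$-Hopf if there exist an invertible $k\times k$ principal submatrix $A[\kappa]$ and positive diagonal $D_1,D_2$ with $\operatorname{inertia}(A[\kappa]D_1)\ne\operatorname{inertia}(A[\kappa]D_2)$. *)

(* Defs.v *)
From HB Require Import structures.
From mathcomp Require Import all_boot all_order all_algebra.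
From mathcomp Require Import closed_field complex.
Set Implicit Arguments. Unset Strict Implicit. Unset Printing Implicit Defensive.
Import Order.TTheory GRing.Theory Num.Theory.
Local Open Scope ring_scope.

Section Defs.
Variable R : rcfType.

Definition cmx (n : nat) (M : 'M[R]_n) : 'M[R[i]]_n := map_mx (real_complex R) M.

Definition eigenvalue_of (n : nat) (M : 'M[R]_n) (z : R[i]) : bool :=
  root (char_poly (cmx M)) z.

(* list of eigenvalues with algebraic multiplicity *)
Definition eigenseq (n : nat) (M : 'M[R]_n) : seq R[i] :=
  sval (closed_field_poly_normal (char_poly (cmx M))).

Definition inertia (n : nat) (M : 'M[R]_n) : nat * nat * nat :=
  (count (fun z => Re z < 0) (eigenseq M),
   count (fun z => 0 < Re z) (eigenseq M),
   count (fun z => Re z == 0) (eigenseq M)).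

Definition hurwitz_stable (n : nat) (M : 'M[R]_n) : Prop :=
  forall z, eigenvalue_of M z -> Re z < 0.

Definition psubmx (n : nat) (A : 'M[R]_n) (kappa : {set 'I_n}) : 'M[R]_#|kappa| :=
  \matrix_(i < #|kappa|, j < #|kappa|) A (enum_val i) (enum_val j).

Definition P0minus (m : nat) (M : 'M[R]_m) : Prop :=
  forall alpha : {set 'I_m}, \det (psubmx M alpha) != 0 ->
    Num.sg (\det (psubmx M alpha)) = (-1) ^+ #|alpha|.

Definition pos_diag (k : nat) (D : 'M[R]_k) : Prop :=
  exists d : 'rV[R]_k, D = diag_mx d /\ forall j, 0 < d 0 j.

Definition D_Hopf (n : nat) (A : 'M[R]_n) : Prop :=
  exists kappa : {set 'I_n}, psubmx A kappa \in unitmx /\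
    exists D1 D2 : 'M[R]_#|kappa|, pos_diag D1 /\ pos_diag D2 /\
      inertia (psubmx A kappa *m D1) <> inertia (psubmx A kappa *m D2).
End Defs.

(* Main.v *)
Require Import Defs.
From HB Require Import structures.
From mathcomp Require Import all_boot all_order all_algebra.
From mathcomp Require Import closed_field complex.
From mathcomp Require Import fingroup perm polyrcf lra.
From Stdlib Require Import Classical_Prop.
Set Implicit Arguments. Unset Strict Implicit. Unset Printing Implicit Defensive.
Import Order.TTheory GRing.Theory Num.Theory.
Local Open Scope ring_scope.

Section K.
Variable R : comNzRingType.

Lemma det_mxsub_bij m k (E : m = k) (f : 'I_m -> 'I_k) (finj : injective f) (M : 'M[R]_k) :
  \det (mxsub f f M) = \det M.
Proof.
subst k.
pose s := perm finj.
have -> : mxsub f f M = row_perm s (col_perm s M).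
  by apply/matrixP => i j; rewrite !mxE !permE.
rewrite row_permE col_permE !det_mulmx !det_perm odd_permV.
by rewrite mulrCA -expr2 sqrr_sign mulr1.
Qed.
End K.

Lemma keyK (R : rcfType) k (M : 'M[R]_k) (S : {set 'I_k}) (c : R) :
  (forall i j, j \notin S -> M i j = (i == j)%:R * c) ->
  \det M = c ^+ #|~: S| * \det (psubmx M S).
Proof.
move=> HM.
pose f : 'I_((#|S| + #|~:S|)%N) -> 'I_k := fun i =>
  match split i with inl a => enum_val a | inr b => enum_val b end.
have E : (#|S| + #|~:S|)%N = k.
  by rewrite cardsC card_ord.
have finj : injective f.
  move=> i j H; apply: (can_inj splitK); move: H; rewrite /f.
  case: (split i) => a; case: (split j) => b.
  - by move/enum_val_inj ->.
  - by move=> H; have := enum_valP b; rewrite -H inE (enum_valP a).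
  - by move=> H; have := enum_valP a; rewrite H inE (enum_valP b).
  - by move/enum_val_inj ->.
rewrite -(det_mxsub_bij E finj).
have -> : mxsub f f M = block_mx (psubmx M S) 0
     (\matrix_(i, j) M (enum_val i) (enum_val j)) (c%:M).
  apply/matrixP => i j; rewrite mxE -(splitK i) -(splitK j).
  case: (split i) => a; case: (split j) => b; rewrite /f !unsplitK /=.
  - by rewrite block_mxEul mxE.
  - rewrite block_mxEur mxE HM; last by have := enum_valP b; rewrite inE.
    case: eqP => [H|]; last by rewrite mul0r.
    by have := enum_valP b; rewrite -H inE (enum_valP a).
  - by rewrite block_mxEdl mxE.
  - rewrite block_mxEdr mxE HM; last by have := enum_valP b; rewrite inE.
    by rewrite (inj_eq enum_val_inj) mulr_natl.
by rewrite det_lblock det_scalar mulrC.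
Qed.

Lemma horner_det (R : comNzRingType) k (Mp : 'M[{poly R}]_k) x :
  (\det Mp).[x] = \det (map_mx (horner_eval x) Mp).
Proof. by rewrite det_map_mx. Qed.

Lemma charpoly_horner (R : comNzRingType) k (M : 'M[R]_k) x :
  (char_poly M).[x] = \det (x%:M - M).
Proof.
rewrite /char_poly horner_det; congr (\det _); apply/matrixP=> i j.
by rewrite !mxE /= horner_evalE hornerD hornerN hornerMn hornerX hornerC.
Qed.

Lemma eigenseq_spec (R : rcfType) k (M : 'M[R]_k) :
  size (eigenseq M) = k /\ forall z, eigenvalue_of M z = (z \in eigenseq M).
Proof.
rewrite /eigenseq /eigenvalue_of; case: closed_field_poly_normal => r /= Hr.
rewrite (monicP (char_poly_monic _)) scale1r in Hr.
split; first by have := size_char_poly (cmx M); rewrite Hr size_prod_XsubC; case.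
by move=> z; rewrite Hr root_prod_XsubC.
Qed.

Lemma pos_charpoly (R : rcfType) k (M : 'M[R]_k) :
  hurwitz_stable M -> forall x, 0 <= x -> 0 < (char_poly M).[x].
Proof.
move=> HM.
have nr : forall y, y \in `[0, +oo[ -> ~~ root (char_poly M) y.
  move=> y; rewrite in_itv /= andbT => y0; apply/negP => ry.
  have : eigenvalue_of M (y%:C)%C.
    rewrite /eigenvalue_of /cmx -map_char_poly rootE horner_map /=.
    by move/rootP: ry => ->; rewrite rmorph0.
  by move/HM; rewrite -complexRe ltcE /= => /andP[_]; rewrite ltNge y0.
move=> x x0.
have := @sgp_pinftyP _ 0 (char_poly M) nr x.
rewrite in_itv /= andbT x0 /sgp_pinfty (monicP (char_poly_monic _)) sgr1.
by move=> /(_ isT) /eqP; rewrite sgr_cp0.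
Qed.

Lemma neg_near (R : rcfType) (q : {poly R}) : q.[0] < 0 -> exists2 e, 0 < e & q.[e] < 0.
Proof.
move=> q0; have e0 : 0 < - q.[0] by rewrite oppr_gt0.
have [d d0 Hd] := poly_cont 0 q e0.
exists (d / 2); first by rewrite divr_gt0.
have : `|d / 2 - 0| < d by rewrite subr0 ger0_norm ?divr_ge0 ?ltW // ltr_pdivrMr // ltr_pMr // ltr1n.
move/Hd => H; move: (ler_norm (q.[d/2] - q.[0])) => H2.
have := le_lt_trans H2 H; lra.
Qed.

Lemma sg_neg (R : rcfType) (d : R) (b : nat) :
  d != 0 -> Num.sg d != (-1) ^+ b -> (-1) ^+ b * d < 0.
Proof.
move=> Hd Hs; rewrite -signr_odd in Hs *; case: (odd b) Hs;
  rewrite ?expr0 ?expr1 => Hs; case: (ltgtP d 0) => H;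
  first [ by rewrite H eqxx in Hd | by rewrite ?(ltr0_sg H) ?(gtr0_sg H) eqxx in Hs | nra ].
Qed.

Unset Implicit Arguments.
Theorem mainTheorem5 (R : rcfType) (n : nat) (A : 'M[R]_n) :
  (exists kappa : {set 'I_n},
      hurwitz_stable (psubmx A kappa) /\ ~ P0minus (psubmx A kappa)) ->
  D_Hopf A.
Proof.
move=> [kappa [Hst HnP]].
set B := psubmx A kappa in Hst HnP *.
have [al [Hd Hs]] : exists al : {set 'I_#|kappa|},
    \det (psubmx B al) != 0 /\ Num.sg (\det (psubmx B al)) != (-1) ^+ #|al|.
  apply: Classical_Prop.NNPP => H; apply: HnP => al Hal.
  apply/eqP; apply/negPn/negP => Hn; apply: H; exists al; split => //.
have hneg : (char_poly (psubmx B al)).[0] < 0.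
  by rewrite horner_coef0 char_poly_det; apply: sg_neg.
have [x0 x0p hx0] := neg_near hneg.
pose dvec (e : R) : 'rV[R]_#|kappa| := \row_j (if j \in al then 1 else e).
pose Mp : 'M[{poly R}]_#|kappa| := \matrix_(i, j)
   ((x0 *+ (i == j))%:P - (B i j)%:P * (if j \in al then 1 else 'X)).
have HP : forall e, (\det Mp).[e] = \det (x0%:M - B *m diag_mx (dvec e)).
  move=> e; rewrite horner_det; congr (\det _); apply/matrixP => i j.
  rewrite mul_mx_diag !mxE horner_evalE hornerD hornerN hornerM !hornerC.
  by case: (j \in al); rewrite ?hornerC ?hornerX mulrC.
have P0 : (\det Mp).[0] < 0.
  rewrite HP (@keyK _ _ _ al x0).
    have -> : psubmx (x0%:M - B *m diag_mx (dvec 0)) al = x0%:M - psubmx B al.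
      apply/matrixP => i j; rewrite /psubmx mul_mx_diag !mxE (enum_valP j).
      by rewrite (inj_eq enum_val_inj) mulr1.
    by rewrite -charpoly_horner pmulr_rlt0 // exprn_gt0.
  move=> i j Hj; rewrite mul_mx_diag !mxE (negbTE Hj) mulr0 subr0.
  by rewrite mulr_natl.
have [e e0 He] := neg_near P0.
exists kappa; split.
  rewrite unitmxE unitfE; have := pos_charpoly Hst (lexx 0).
  rewrite horner_coef0 char_poly_det; apply: contraTneq => ->.
  by rewrite mulr0 ltxx.
exists (diag_mx (const_mx 1)), (diag_mx (dvec e)); split.
  by exists (const_mx 1); split => // j; rewrite mxE ltr01.
split.
  by exists (dvec e); split => // j; rewrite mxE; case: ifP => _ //; rewrite ltr01.
rewrite diag_const_mx mulmx1 => Heq.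
have Hst2 : hurwitz_stable (B *m diag_mx (dvec e)).
  move=> z Hz.
  have [s1 m1] := eigenseq_spec B.
  have [s2 m2] := eigenseq_spec (B *m diag_mx (dvec e)).
  move: Heq; rewrite /inertia => -[E1 _ _].
  have : count (fun z => 'Re z < 0) (eigenseq B) = size (eigenseq B).
    by apply/eqP; rewrite -all_count; apply/allP => w; rewrite -m1; exact: Hst.
  rewrite E1 s1 => H3.
  have : count (fun z => 'Re z < 0) (eigenseq (B *m diag_mx (dvec e))) ==
         size (eigenseq (B *m diag_mx (dvec e))) by rewrite H3 s2.
  rewrite -all_count => /allP; apply.
  by rewrite -m2.
have := pos_charpoly Hst2 (ltW x0p); rewrite charpoly_horner -HP.
by move=> H; have := lt_trans H He; rewrite ltxx.
Qed.
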